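(* Let the binary predicate symbols be $\mathcal F=\{f,g,h\}$ (with arbitrary unary symbols), and for a variable $x$ define $P_f(x):=\exists^{=1}y.f(x,y)\wedge\exists^{=0}y.(g(x,y)\vee h(x,y))$, $P_g(x):=\exists^{=1}y.g(x,y)\wedge\exists^{=0}y.(f(x,y)\vee h(x,y))$, and $P_{fg}(x):=\exists^{=1}y.f(x,y)\wedge\exists^{=1}y.g(x,y)\wedge\exists^{=0}y.h(x,y)$. Then (a) $P_{fg}\sim P_f*P_g$, and (b) $P_{fg}$ is not equivalent to any boolean combination of $P_f$ and $P_g$.
   Context: Environments: finite nonempty domain $D$, interpretations of unary predicates as subsets of $D$ and of $f,g,h$ as subsets of $D\times D$, and an assignment of elements to variables. $\exists^{=k}y.G$ means exactly $k$ elements $y$ satisfy $G$. $[\![G_1*G_2]\!]e$ holds iff there are environments $e_1,e_2$ with the same domain and variable assignment such that each predicate symbol's interpretation in $e$ is the disjoint union of its interpretations in $e_1,e_2$, and $G_1$ holds in $e_1$, $G_2$ in $e_2$. $G\sim H$ means equal truth values in all environments. *)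

(* Defs.v *)
From mathcomp Require Import all_boot.
Set Implicit Arguments. Unset Strict Implicit. Unset Printing Implicit Defensive.

(* Environments over a finite domain D (nonemptiness is a separate hypothesis),
   with unary predicate symbols indexed by U and variables indexed by V. *)
Record env (U V : Type) (D : finType) := Env {
  un : U -> {set D};
  rf : {set D * D};
  rg : {set D * D};
  rh : {set D * D};
  asg : V -> D
}.

Definition disj_union (T : finType) (A A1 A2 : {set T}) : Prop :=
  A = A1 :|: A2 /\ [disjoint A1 & A2].

(* Formulas with free variable x are represented by their semantics. *)
Definition sem (U V : Type) := forall D : finType, env U V D -> Prop.

Definition exk (D : finType) (k : nat) (G : pred D) : Prop := #|[set y | G y]| = k.

Section Props.
Variables (U V : Type) (x : V).

Definition P_f : sem U V := fun D e =>
  exk 1 (fun y => (asg e x, y) \in rf e) /\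
  exk 0 (fun y => ((asg e x, y) \in rg e) || ((asg e x, y) \in rh e)).

Definition P_g : sem U V := fun D e =>
  exk 1 (fun y => (asg e x, y) \in rg e) /\
  exk 0 (fun y => ((asg e x, y) \in rf e) || ((asg e x, y) \in rh e)).

Definition P_fg : sem U V := fun D e =>
  exk 1 (fun y => (asg e x, y) \in rf e) /\
  exk 1 (fun y => (asg e x, y) \in rg e) /\
  exk 0 (fun y => (asg e x, y) \in rh e).
End Props.

Definition star (U V : Type) (G1 G2 : sem U V) : sem U V := fun D e =>
  exists e1 e2 : env U V D,
    asg e1 = asg e /\ asg e2 = asg e /\
    (forall u, disj_union (un e u) (un e1 u) (un e2 u)) /\
    disj_union (rf e) (rf e1) (rf e2) /\
    disj_union (rg e) (rg e1) (rg e2) /\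
    disj_union (rh e) (rh e1) (rh e2) /\
    G1 D e1 /\ G2 D e2.

Definition fequiv (U V : Type) (G H : sem U V) : Prop :=
  forall (D : finType) (e : env U V D), 0 < #|D| -> (G D e <-> H D e).

Inductive bcomb := BA | BB | BTrue | BFalse | BNot of bcomb
  | BAnd of bcomb & bcomb | BOr of bcomb & bcomb.

Fixpoint bsem (U V : Type) (A B : sem U V) (c : bcomb) : sem U V :=
  match c with
  | BA => A
  | BB => B
  | BTrue => fun _ _ => True
  | BFalse => fun _ _ => False
  | BNot c => fun D e => ~ @bsem U V A B c D e
  | BAnd c1 c2 => fun D e => @bsem U V A B c1 D e /\ @bsem U V A B c2 D e
  | BOr c1 c2 => fun D e => @bsem U V A B c1 D e \/ @bsem U V A B c2 D e
  end.

(* Main.v *)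
Require Import Defs.
From mathcomp Require Import all_boot.

Lemma set0P' (D : finType) (p : pred D) :
  #|[set y | p y]| = 0 <-> forall y, p y = false.
Proof.
split.
- move=> /eqP; rewrite cards_eq0 => /eqP H y.
  apply/negbTE; have : y \notin [set y | p y] by rewrite H inE.
  by rewrite inE.
- move=> H; apply/eqP; rewrite cards_eq0; apply/eqP/setP=> y; by rewrite !inE H.
Qed.

Lemma or0 (D : finType) (p q : pred D) :
  #|[set y | p y || q y]| = 0 <-> (#|[set y | p y]| = 0 /\ #|[set y | q y]| = 0).
Proof.
split.
- move/set0P'=> H; split; apply/set0P' => y; have := H y; by case: (p y); case: (q y).
- by case=> /set0P' H1 /set0P' H2; apply/set0P' => y; rewrite H1 H2.
Qed.

Lemma unE (D : finType) (a : D) (A1 A2 : {set D * D}) :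
  #|[set y | (a, y) \in A2]| = 0 ->
  [set y | (a, y) \in A1 :|: A2] = [set y | (a, y) \in A1].
Proof.
move/set0P' => H; apply/setP=> y; by rewrite !inE H orbF.
Qed.

Lemma unE' (D : finType) (a : D) (A1 A2 : {set D * D}) :
  #|[set y | (a, y) \in A1]| = 0 ->
  [set y | (a, y) \in A1 :|: A2] = [set y | (a, y) \in A2].
Proof.
move/set0P' => H; apply/setP=> y; by rewrite !inE H.
Qed.

Lemma bsem_resp (U V : Type) (A B : sem U V) (D1 D2 : finType)
  (e1 : env U V D1) (e2 : env U V D2) :
  (A D1 e1 <-> A D2 e2) -> (B D1 e1 <-> B D2 e2) ->
  forall c, @bsem U V A B c D1 e1 <-> @bsem U V A B c D2 e2.
Proof.
move=> HA HB; elim=> //= [c IH|c1 IH1 c2 IH2|c1 IH1 c2 IH2]; tauto.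
Qed.

Definition efg (U V : Type) : env U V unit :=
  @Env U V unit (fun _ => set0) [set (tt, tt)] [set (tt, tt)] set0 (fun _ => tt).
Definition e0 (U V : Type) : env U V unit :=
  @Env U V unit (fun _ => set0) set0 set0 set0 (fun _ => tt).

Lemma cardT1 : #|[set y : unit | true]| = 1.
Proof. by rewrite cardsT card_unit. Qed.

Theorem mainTheorem13 (U V : Type) (x : V) :
  @fequiv U V (@P_fg U V x) (@star U V (@P_f U V x) (@P_g U V x)) /\
  (forall c : bcomb,
     ~ @fequiv U V (@P_fg U V x) (@bsem U V (@P_f U V x) (@P_g U V x) c)).
Proof.
split.
- move=> D e _; split.
  + case=> Hf [Hg Hh].
    exists (@Env U V D (un e) (rf e) set0 set0 (asg e)).
    exists (@Env U V D (fun _ => set0) set0 (rg e) (rh e) (asg e)).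
    do 2 split => //.
    split; first by move=> u; split; [rewrite setU0 | by rewrite -setI_eq0 setI0].
    split; first by split; [rewrite setU0 | by rewrite -setI_eq0 setI0].
    split; first by split; [rewrite set0U | by rewrite -setI_eq0 set0I].
    split; first by split; [rewrite set0U | by rewrite -setI_eq0 set0I].
    split; rewrite /P_f /P_g /exk /=; split => //; apply/or0; split => //;
      apply/set0P' => y; by rewrite inE.
  + case=> e1 [e2 [H1 [H2 [_ [[Ef _] [[Eg _] [[Eh _] [[Hf1 Hgh1] [Hg2 Hfh2]]]]]]]]].
    move: Hgh1 Hfh2; rewrite /exk => /or0 [Hg1 Hh1] /or0 [Hf2 Hh2].
    rewrite H1 in Hf1 Hg1 Hh1; rewrite H2 in Hg2 Hf2 Hh2.
    rewrite /P_fg /exk Ef Eg Eh unE // unE' // unE //.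
- move=> c H.
  have Hpos : 0 < #|{: unit}| by rewrite card_unit.
  have A1 : @P_fg U V x unit (efg U V).
    rewrite /P_fg /exk /=; split; last split.
    + rewrite -cardT1; apply: eq_card => y; rewrite !inE; by case: y.
    + rewrite -cardT1; apply: eq_card => y; rewrite !inE; by case: y.
    + by apply/set0P' => y; rewrite inE.
  have A2 : ~ @P_fg U V x unit (e0 U V).
    rewrite /P_fg /exk /=; case=> Hf _; move: Hf.
    have -> : [set y : unit | (tt, y) \in set0] = set0 by apply/setP=> y; rewrite !inE.
    by rewrite cards0.
  have NF1 : ~ @P_f U V x unit (efg U V).
    rewrite /P_f /exk /=; case=> _ /or0 [/set0P' Hg _].
    by move: (Hg tt); rewrite inE.
  have NG1 : ~ @P_g U V x unit (efg U V).
    rewrite /P_g /exk /=; case=> _ /or0 [/set0P' Hg _].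
    by move: (Hg tt); rewrite inE.
  have NF0 : ~ @P_f U V x unit (e0 U V).
    rewrite /P_f /exk /=; case=> Hf _; move: Hf.
    have -> : [set y : unit | (tt, y) \in set0] = set0 by apply/setP=> y; rewrite !inE.
    by rewrite cards0.
  have NG0 : ~ @P_g U V x unit (e0 U V).
    rewrite /P_g /exk /=; case=> Hf _; move: Hf.
    have -> : [set y : unit | (tt, y) \in set0] = set0 by apply/setP=> y; rewrite !inE.
    by rewrite cards0.
  have E := @bsem_resp U V (@P_f U V x) (@P_g U V x) unit unit (efg U V) (e0 U V)
    ltac:(tauto) ltac:(tauto) c.
  have := H unit (efg U V) Hpos; have := H unit (e0 U V) Hpos. tauto.
Qed.
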